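(* Let $n,k$ be integers with $1<k<n-1$ and let $\mathcal{P}_{k,n}=\{x\in[0,1]^n:\sum_{i=1}^nx_i=k\}$. There is no differentiable strong Bernoulli factory for $\mathcal{P}_{k,n}$.
   Context: A Bernoulli factory with output set $V$ (for inputs $x\in[0,1]^n$) is a (possibly infinite) rooted binary tree whose internal nodes are labeled by an index $i\in[n]$ or a known constant $c\in(0,1)$ and whose leaves are labeled by elements of $V$; on input $x$ one walks from the root, at a node labeled $i$ flipping a fresh independent coin that is $1$ with probability $x_i$, at a node labeled $c$ a fresh coin of bias $c$, following the edge labeled by the outcome, and outputs the label of the leaf reached; $\mathcal{F}(x)$ is the output and $T_{\mathcal{F}}(x)$ the depth of the leaf reached ($\infty$ if none). For a polytope $\mathcal{P}$ with vertex set $V$, a strong Bernoulli factory for $\mathcal{P}$ is such a factory with output set $V$ that terminates almost surely and satisfies $\mathbb{E}[\mathcal{F}(x)]=x$ for all $x\in\mathcal{P}$. Define $P_v(x)=\Pr[\mathcal{F}(x)=v]$ and $P_{v,T}(x)=\Pr[\mathcal{F}(x)=v\wedge T_{\mathcal{F}}(x)\le T]$; the latter is the polynomial equal to the sum, over leaves labeled $v$ at depth at most $T$, of the product of the transition probabilities along the root-to-leaf path. Let $\mathcal{H}(\mathcal{P})$ be the affine span of $\mathcal{P}$ and $\mathcal{H}_0(\mathcal{P})=\{y-y':y,y'\in\mathcal{H}(\mathcal{P})\}$. $\mathcal{F}$ is differentiable (as a factory for $\mathcal{P}$) if for each $v\in V$ and each $u\in\mathcal{H}_0(\mathcal{P})$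 with $\|u\|=1$, at every $x\in\mathcal{P}$ the directional derivative $\partial_uP_v(x)$ exists and equals $\lim_{T\to\infty}\partial_uP_{v,T}(x)$. *)

(* Defs.v *)
From HB Require Import structures.
From mathcomp Require Import all_boot all_order all_algebra.
From mathcomp Require Import all_classical all_reals all_analysis.
Set Implicit Arguments. Unset Strict Implicit. Unset Printing Implicit Defensive.
Import Order.TTheory GRing.Theory Num.Theory.
Import numFieldNormedType.Exports.
Local Open Scope classical_set_scope.
Local Open Scope ring_scope.

(* Points of R^n are row vectors 'rV[R]_n; coordinate i of x is x ord0 i. *)

Definition hypersimplex (R : realType) (n k : nat) : set 'rV[R]_n :=
  [set x | (forall i : 'I_n, 0 <= x ord0 i <= 1) /\ \sum_(i < n) x ord0 i = k%:R].

Definition extreme_point (R : realType) (n : nat) (A : set 'rV[R]_n)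
    (v : 'rV[R]_n) : Prop :=
  A v /\ ~ (exists (y z : 'rV[R]_n) (l : R), A y /\ A z /\ y != z /\
            0 < l < 1 /\ v = l *: y + (1 - l) *: z).

Definition affine_span (R : realType) (n : nat) (A : set 'rV[R]_n) : set 'rV[R]_n :=
  [set y | exists (m : nat) (p : 'I_m -> 'rV[R]_n) (c : 'I_m -> R),
     (forall j, A (p j)) /\ \sum_(j < m) c j = 1 /\ y = \sum_(j < m) c j *: p j].

Definition affine_dir (R : realType) (n : nat) (A : set 'rV[R]_n) : set 'rV[R]_n :=
  [set u | exists y y', affine_span A y /\ affine_span A y' /\ u = y - y'].

Definition enorm (R : realType) (n : nat) (u : 'rV[R]_n) : R :=
  Num.sqrt (\sum_(i < n) u ord0 i ^+ 2).

Inductive node (R : realType) (n : nat) :=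
  | Coin of 'I_n
  | Const of R
  | Leaf of 'rV[R]_n.
Arguments Coin {R n}.
Arguments Const {R n}.
Arguments Leaf {R n}.

(* A (possibly infinite) rooted binary tree is given by the labels of its
   nodes, each node being addressed by the sequence of edge labels (coin
   outcomes) from the root; the children of an internal node s are
   rcons s false and rcons s true.  Nodes below a leaf are never reached. *)
Definition factory (R : realType) (n : nat) := seq bool -> node R n.

Definition factory_wf (R : realType) (n : nat) (V : set 'rV[R]_n)
    (F : factory R n) : Prop :=
  forall s, match F s with
            | Coin _ => True
            | Const c => 0 < c < 1
            | Leaf v => V v
            end.

(* Probability of following the edges s starting at node pre (product of
   transition probabilities); 0 if the walk would stop at a leaf before. *)
Fixpoint pathprob (R : realType) (n : nat) (F : factory R n) (x : 'rV[R]_n)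
    (pre s : seq bool) : R :=
  match s with
  | [::] => 1
  | b :: s' =>
      let p := match F pre with
               | Coin i => if b then x ord0 i else 1 - x ord0 i
               | Const c => if b then c else 1 - c
               | Leaf _ => 0
               end in
      p * pathprob F x (rcons pre b) s'
  end.

Definition reachprob (R : realType) (n : nat) (F : factory R n) (x : 'rV[R]_n)
    (s : seq bool) : R := pathprob F x [::] s.

(* P_{v,T}(x) = Pr[F(x) = v and T_F(x) <= T]. *)
Definition PvT (R : realType) (n : nat) (F : factory R n) (v : 'rV[R]_n)
    (T : nat) (x : 'rV[R]_n) : R :=
  \sum_(t < T.+1) \sum_(s : t.-tuple bool)
     match F (val s) with
     | Leaf w => if w == v then reachprob F x (val s) else 0
     | _ => 0
     end.

Definition haltT (R : realType) (n : nat) (F : factory R n) (T : nat)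
    (x : 'rV[R]_n) : R :=
  \sum_(t < T.+1) \sum_(s : t.-tuple bool)
     match F (val s) with
     | Leaf _ => reachprob F x (val s)
     | _ => 0
     end.

(* E[F(x) ; T_F(x) <= T]. *)
Definition expT (R : realType) (n : nat) (F : factory R n) (T : nat)
    (x : 'rV[R]_n) : 'rV[R]_n :=
  \sum_(t < T.+1) \sum_(s : t.-tuple bool)
     match F (val s) with
     | Leaf w => reachprob F x (val s) *: w
     | _ => 0
     end.

Definition Pv (R : realType) (n : nat) (F : factory R n) (v : 'rV[R]_n)
    (x : 'rV[R]_n) : R :=
  lim ((fun T => PvT F v T x) @ \oo).

(* Strong Bernoulli factory for the polytope P (with vertex set V = extreme
   points of P): terminates almost surely and E[F(x)] = x, for all x in P. *)
Definition strong_factory (R : realType) (n : nat) (P : set 'rV[R]_n)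
    (F : factory R n) : Prop :=
  factory_wf (extreme_point P) F /\
  (forall x, P x ->
     ((fun T => haltT F T x) @ \oo --> (1 : R)) /\
     ((fun T => expT F T x) @ \oo --> x)).

Definition dir_deriv (R : realType) (n : nat) (f : 'rV[R]_n -> R)
    (x u : 'rV[R]_n) : R :=
  derive1 (fun t : R => f (x + t *: u)) 0.

(* The directional derivative of f at x in direction u exists and equals d,
   where the difference quotient is taken along points x + t u lying in the
   domain P (on which the factory probabilities are defined). *)
Definition has_dir_deriv_in (R : realType) (n : nat) (P : set 'rV[R]_n)
    (f : 'rV[R]_n -> R) (x u : 'rV[R]_n) (d : R) : Prop :=
  (fun t : R => (f (x + t *: u) - f x) / t)
     @ within [set t : R | t != 0 /\ P (x + t *: u)] (nbhs (0 : R)) --> d.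

Definition differentiable_factory (R : realType) (n : nat) (P : set 'rV[R]_n)
    (F : factory R n) : Prop :=
  forall v, extreme_point P v ->
  forall u, affine_dir P u -> enorm u = 1 ->
  forall x, P x ->
    exists d : R, has_dir_deriv_in P (Pv F v) x u d /\
                  ((fun T => dir_deriv (PvT F v T) x u) @ \oo --> d).

(* Main.v *)
Require Import Defs.
From HB Require Import structures.
From mathcomp Require Import all_boot all_order all_algebra.
From mathcomp Require Import all_classical all_reals all_analysis.
From mathcomp Require Import ring lra.
Set Implicit Arguments. Unset Strict Implicit. Unset Printing Implicit Defensive.
Import Order.TTheory GRing.Theory Num.Theory.
Import numFieldNormedType.Exports.
Local Open Scope classical_set_scope.
Local Open Scope ring_scope.

Section S.
Variables (R : realType) (n : nat).
Implicit Types (F : factory R n) (x u : 'rV[R]_n).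

Definition inbox x := forall i : 'I_n, 0 <= x ord0 i <= 1.

Lemma pathprob_ge0 F V x pre s : factory_wf V F -> inbox x -> 0 <= pathprob F x pre s.
Proof.
move=> wf bx; elim: s pre => [|b s IH] pre /=; first exact: ler01.
apply: mulr_ge0 => //; have := wf pre; case: (F pre) => [i|c|z] /=.
- by move=> _; have /andP[h0 h1] := bx i; case: b; rewrite ?subr_ge0.
- by move=> /andP[h0 h1]; case: b; rewrite ?subr_ge0 ltW.
- by [].
Qed.

Definition W F (g : 'rV[R]_n -> R) (T : nat) x : R :=
  \sum_(t < T.+1) \sum_(s : t.-tuple bool)
     match F (val s) with
     | Leaf z => reachprob F x (val s) * g z
     | _ => 0
     end.

Lemma PvT_W F v T x : PvT F v T x = W F (fun z => (z == v)%:R) T x.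
Proof.
apply: eq_bigr => t _; apply: eq_bigr => s _; case: (F (val s)) => // z.
by case: (z == v); rewrite ?mulr1 ?mulr0.
Qed.

Lemma haltT_W F T x : haltT F T x = W F (fun _ => 1) T x.
Proof.
apply: eq_bigr => t _; apply: eq_bigr => s _; case: (F (val s)) => // z.
by rewrite mulr1.
Qed.

Lemma expT_W F T x i : expT F T x ord0 i = W F (fun z => z ord0 i) T x.
Proof.
rewrite /expT summxE; apply: eq_bigr => t _; rewrite summxE.
apply: eq_bigr => s _; case: (F (val s)) => [j|c|z]; by rewrite !mxE.
Qed.

Lemma W_sub F g1 g2 T x : W F (fun z => g1 z - g2 z) T x = W F g1 T x - W F g2 T x.
Proof.
rewrite /W -sumrB; apply: eq_bigr => t _; rewrite -sumrB.
apply: eq_bigr => s _; case: (F (val s)) => [j|c|z]; by rewrite ?subr0 ?mulrBr.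
Qed.

Lemma W_sum F (I : finType) (P : pred I) (g : I -> 'rV[R]_n -> R) T x :
  W F (fun z => \sum_(l | P l) g l z) T x = \sum_(l | P l) W F (g l) T x.
Proof.
rewrite /W exchange_big; apply: eq_bigr => t _; rewrite exchange_big.
apply: eq_bigr => s _; case: (F (val s)) => [j|c|z]; rewrite ?mulr_sumr //.
by rewrite big1.
by rewrite big1.
Qed.

Lemma W_le F V g1 g2 T x : factory_wf V F -> inbox x ->
  (forall z, V z -> g1 z <= g2 z) -> W F g1 T x <= W F g2 T x.
Proof.
move=> wf bx h; apply: ler_sum => t _; apply: ler_sum => s _.
have := wf (val s); case: (F (val s)) => // z Vz.
by apply: ler_wpM2l; [exact: pathprob_ge0 wf bx | exact: h].
Qed.

End S.
Section D.
Variables (R : realType) (n : nat).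
Implicit Types (F : factory R n) (x u : 'rV[R]_n).

Lemma lin_der (a b : R) : is_derive (0:R) 1 (fun t : R => a + t * b) b.
Proof.
have h1 : is_derive (0:R) 1 (fun t : R => t * b) b.
  have := @is_deriveM R R^o id (cst b) 0 1 1 0 (is_derive_id _ _) (is_derive_cst _ _ _).
  rewrite scaler0 add0r /cst /= -[b%:A]/(b * 1) mulr1 => h; exact: h.
have := @is_deriveD R R^o R^o (cst a) (fun t => t * b) 0 1 0 b (is_derive_cst _ _ _) h1.
by rewrite add0r.
Qed.

Lemma derC (a : R) : is_derive (0:R) 1 (fun _ : R => a) 0.
Proof. exact: (is_derive_cst a). Qed.

Lemma derM (f g : R -> R) df dg : is_derive (0:R) 1 f df -> is_derive (0:R) 1 g dg ->
  is_derive (0:R) 1 (fun t => f t * g t) (f 0 * dg + g 0 * df).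
Proof. by move=> h1 h2; have := @is_deriveM R R^o f g 0 1 df dg h1 h2. Qed.

Lemma derD (f g : R -> R) df dg : is_derive (0:R) 1 f df -> is_derive (0:R) 1 g dg ->
  is_derive (0:R) 1 (fun t => f t + g t) (df + dg).
Proof. by move=> h1 h2; have := @is_deriveD R R^o R^o f g 0 1 df dg h1 h2. Qed.

Lemma der_sum (I : Type) (r : seq I) (f : I -> R -> R) df :
  (forall i, is_derive (0:R) 1 (f i) (df i)) ->
  is_derive (0:R) 1 (fun t => \sum_(i <- r) f i t) (\sum_(i <- r) df i).
Proof.
move=> h; elim: r => [|i r IH].
  have -> : (fun t : R => \sum_(i <- [::]) f i t) = fun _ => 0.
    by apply/funext => t; rewrite big_nil.
  by rewrite big_nil; exact: derC.
have -> : (fun t : R => \sum_(j <- i :: r) f j t) = fun t => f i t + \sum_(j <- r) f j t.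
  by apply/funext => t; rewrite big_cons.
by rewrite big_cons; apply: derD.
Qed.

Lemma coord_der x u i : is_derive (0:R) 1 (fun t : R => (x + t *: u) ord0 i) (u ord0 i).
Proof.
have -> : (fun t : R => (x + t *: u) ord0 i) = (fun t => x ord0 i + t * u ord0 i).
  by apply/funext => t; rewrite !mxE.
exact: lin_der.
Qed.

Lemma coord_der' x u i : is_derive (0:R) 1 (fun t : R => 1 - (x + t *: u) ord0 i) (- u ord0 i).
Proof.
have -> : (fun t : R => 1 - (x + t *: u) ord0 i) = (fun t => (1 - x ord0 i) + t * (- u ord0 i)).
  by apply/funext => t; rewrite !mxE; ring.
exact: lin_der.
Qed.

Fixpoint dpath F x u (pre s : seq bool) : R :=
  match s with
  | [::] => 0
  | b :: s' =>
      let p := match F pre with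
               | Coin i => if b then x ord0 i else 1 - x ord0 i
               | Const c => if b then c else 1 - c
               | Leaf _ => 0
               end in
      let dp := match F pre with
               | Coin i => if b then u ord0 i else - u ord0 i
               | _ => 0
               end in
      dp * pathprob F x (rcons pre b) s' + p * dpath F x u (rcons pre b) s'
  end.

Lemma pathprob_der F x u pre s :
  is_derive (0:R) 1 (fun t => pathprob F (x + t *: u) pre s) (dpath F x u pre s).
Proof.
elim: s pre => [|b s IH] pre /=; first exact: derC.
have e0 : x + 0 *: u = x by rewrite scale0r addr0.
case: (F pre) => [i|c|z].
- case: b.
  + have := derM (coord_der x u i) (IH (rcons pre true)); rewrite /= e0 => h.
    by apply: is_derive_eq h _; rewrite addrC mulrC.
  + have := derM (coord_der' x u i) (IH (rcons pre false)); rewrite /= e0 => h.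
    by apply: is_derive_eq h _; rewrite addrC mulrC.
- have := derM (derC (if b then c else 1 - c)) (IH (rcons pre b)); rewrite /= e0 => h.
  by apply: is_derive_eq h _; rewrite mulr0 addr0 mul0r add0r.
- have := derM (derC 0) (IH (rcons pre b)); rewrite /= e0 => h.
  by apply: is_derive_eq h _; rewrite !mulr0 !mul0r addr0.
Qed.

Definition DPvT F v T x u : R :=
  \sum_(t < T.+1) \sum_(s : t.-tuple bool)
     match F (val s) with
     | Leaf z => if z == v then dpath F x u [::] (val s) else 0
     | _ => 0
     end.

Lemma dir_deriv_PvT F v T x u : dir_deriv (PvT F v T) x u = DPvT F v T x u.
Proof.
rewrite /dir_deriv derive1E.
suff h : is_derive (0:R) 1 (fun t => PvT F v T (x + t *: u)) (DPvT F v T x u).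
  exact: derive_val.
apply: der_sum => t; apply: der_sum => s.
case: (F (val s)) => [i|c|z]; try exact: derC.
case: (z == v); last exact: derC.
exact: pathprob_der.
Qed.

Lemma dpath_lin F x u1 u2 u3 pre s :
  dpath F x (u1 + u2 - u3) pre s = dpath F x u1 pre s + dpath F x u2 pre s - dpath F x u3 pre s.
Proof.
elim: s pre => [|b s IH] pre /=; first by rewrite subr0 addr0.
rewrite IH; case: (F pre) => [i|c|z]; first case: b; rewrite ?mxE; ring.
Qed.

Lemma DPvT_lin F v T x u1 u2 u3 :
  DPvT F v T x (u1 + u2 - u3) = DPvT F v T x u1 + DPvT F v T x u2 - DPvT F v T x u3.
Proof.
rewrite /DPvT -big_split -sumrB /=; apply: eq_bigr => t _.
rewrite -big_split -sumrB /=; apply: eq_bigr => s _.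
case: (F (val s)) => [i|c|z]; rewrite ?addr0 ?subr0 //.
by case: (z == v); rewrite ?dpath_lin ?addr0 ?subr0.
Qed.

End D.
Section L.
Variables (R : realType) (n : nat).
Lemma coord_cvg (f : nat -> 'rV[R]_n) (x : 'rV[R]_n) i :
  f @ \oo --> x -> (fun T => f T ord0 i) @ \oo --> x ord0 i.
Proof.
move=> h.
exact: (cvg_comp _ _ h (@coord_continuous R 1 n ord0 i x)).
Qed.

Lemma cvg_bigsum (I : Type) (r : seq I) (f : I -> nat -> R) (l : I -> R) :
  (forall i, f i @ \oo --> l i) ->
  (fun T => \sum_(i <- r) f i T) @ \oo --> \sum_(i <- r) l i.
Proof.
move=> h; elim: r => [|i r IH].
  have -> : (fun T => \sum_(i <- [::]) f i T) = fun _ => 0.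
    by apply/funext => t; rewrite big_nil.
  by rewrite big_nil; exact: cvg_cst.
have -> : (fun T => \sum_(j <- i :: r) f j T) = (f i) + (fun T => \sum_(j <- r) f j T).
  by apply/funext => t; rewrite big_cons.
by rewrite big_cons; apply: cvgD.
Qed.

Lemma lim_eq (f : nat -> R) l : f @ \oo --> l -> lim (f @ \oo) = l.
Proof. by move=> h; apply: cvg_lim. Qed.

End L.
Arguments W_le {R n F V g1 g2 T x}.
Section G.
Variables (R : realType) (n k : nat).
Local Notation P := (@hypersimplex R n k).

Definition dl (q : 'I_n) : 'rV[R]_n := \row_l ((l == q)%:R).
Definition sw (x : 'rV[R]_n) (p q : 'I_n) (s : R) := x + s *: (dl q - dl p).

Lemma sw_coord x p q s l :
  sw x p q s ord0 l = x ord0 l + s * ((l == q)%:R - (l == p)%:R).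
Proof. by rewrite !mxE. Qed.

Lemma sum_dl (q : 'I_n) : \sum_(l < n) ((l == q)%:R : R) = 1.
Proof. by rewrite (bigD1 q) //= eqxx big1 ?addr0 // => l /negbTE ->. Qed.

Lemma sum_sw x p q s : \sum_(l < n) sw x p q s ord0 l = \sum_(l < n) x ord0 l.
Proof.
under eq_bigr do rewrite sw_coord.
by rewrite big_split /= -mulr_sumr sumrB !sum_dl subrr mulr0 addr0.
Qed.

Lemma sw_P x p q s : P x -> p != q ->
  0 <= x ord0 q + s <= 1 -> 0 <= x ord0 p - s <= 1 -> P (sw x p q s).
Proof.
move=> [bx sx] npq hq hp; split; last by rewrite sum_sw.
move=> l; rewrite sw_coord.
have [->|lq] := eqVneq l q; first by rewrite eq_sym (negbTE npq) subr0 mulr1.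
have [->|lp] := eqVneq l p; first by rewrite sub0r mulrN1.
by rewrite subrr mulr0 addr0.
Qed.

Lemma sw_P_inv (x : 'rV[R]_n) p q s : x ord0 q = 0 -> p != q -> P (sw x p q s) -> 0 <= s <= 1.
Proof.
move=> xq npq [bx _]; have := bx q.
by rewrite sw_coord xq eqxx eq_sym (negbTE npq) subr0 mulr1 add0r.
Qed.

Lemma sum01 (I : finType) (r : pred I) (f : I -> R) :
  (forall i, r i -> f i = 0 \/ f i = 1) -> exists m : nat, \sum_(i | r i) f i = m%:R.
Proof.
move=> h; elim/big_ind: _.
- by exists 0%N.
- by move=> _ _ [m1 ->] [m2 ->]; exists (m1 + m2)%N; rewrite natrD.
- by move=> i /h [] ->; [exists 0%N | exists 1%N].
Qed.

Lemma ext01 z : extreme_point P z -> forall i, z ord0 i = 0 \/ z ord0 i = 1.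
Proof.
move=> [[bz sz] nex] i.
have [h0|h0] := eqVneq (z ord0 i) 0; first by left.
have [h1|h1] := eqVneq (z ord0 i) 1; first by right.
exfalso.
have /andP[zi0 zi1] := bz i.
have zi0' : 0 < z ord0 i by rewrite lt_neqAle eq_sym h0.
have zi1' : z ord0 i < 1 by rewrite lt_neqAle h1.
case: (boolP [exists j, (j != i) && (0 < z ord0 j < 1)]) => [/existsP [j /andP[ji /andP[zj0 zj1]]] | /existsPn hn].
- pose e := Num.min (Num.min (z ord0 i) (1 - z ord0 i)) (Num.min (z ord0 j) (1 - z ord0 j)).
  have e0 : 0 < e by rewrite !lt_min zi0' zj0 !subr_gt0 zi1' zj1.
  have e1 : e <= z ord0 i /\ e <= 1 - z ord0 i /\ e <= z ord0 j /\ e <= 1 - z ord0 j.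
    by rewrite !ge_min !le_refl /= ?orbT.
  move: e1 => [e1 [e2 [e3 e4]]].
  apply: nex; exists (sw z j i e), (sw z j i (- e)), (2^-1); split.
    apply: sw_P; [by split | exact: ji | apply/andP; split; lra | apply/andP; split; lra].
  split.
    apply: sw_P; [by split | exact: ji | apply/andP; split; lra | apply/andP; split; lra].
  split.
    apply/eqP => /rowP /(_ i); rewrite !sw_coord eqxx (eq_sym i j) (negbTE ji) subr0 !mulr1 => /eqP.
    lra.
  split; first by apply/andP; split; lra.
  by apply/rowP => l; rewrite !mxE; field.
- have [m hm] : exists m : nat, \sum_(j | j != i) z ord0 j = m%:R.
    apply: sum01 => j ji.
    have := hn j; rewrite ji /= => /negP hnj.
    have /andP[zj0 zj1] := bz j.
    have [->|jn0] := eqVneq (z ord0 j) 0; first by left.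
    right; apply/eqP; rewrite eq_le zj1 /= leNgt; apply/negP => zl1; apply: hnj.
    by rewrite lt_neqAle eq_sym jn0 zj0 zl1.
  move: sz; rewrite (bigD1 i) //= hm => hk.
  have a1 : (m%:R : R) < k%:R by lra.
  have a2 : (k%:R : R) < (m.+1)%:R by rewrite -addn1 natrD; lra.
  rewrite ltr_nat in a1; rewrite ltr_nat ltnS in a2; by move: a2; rewrite leqNgt a1.
Qed.
End G.
Section P.
Variables (R : realType) (n k : nat).
Local Notation P := (@hypersimplex R n k).
Variable F : factory R n.
Hypothesis wf : factory_wf (extreme_point P) F.
Hypothesis conv : forall x, P x ->
     ((fun T => haltT F T x) @ \oo --> (1 : R)) /\
     ((fun T => expT F T x) @ \oo --> x).

Lemma P_inbox x : P x -> inbox x.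
Proof. by case. Qed.

Lemma W0 g T x : (forall z, g z = 0) -> W F g T x = 0.
Proof.
move=> h; apply: big1 => t _; apply: big1 => s _.
by case: (F (val s)) => // z; rewrite h mulr0.
Qed.

Lemma halt_cvg x : P x -> (fun T => W F (fun _ => 1) T x) @ \oo --> (1:R).
Proof.
move=> Px; have [h _] := conv Px.
by have -> : (fun T => W F (fun _ => 1) T x) = (fun T => haltT F T x)
  by apply/funext => T; rewrite haltT_W.
Qed.

Lemma coordW_cvg x i : P x -> (fun T => W F (fun z => z ord0 i) T x) @ \oo --> x ord0 i.
Proof.
move=> Px; have [_ h] := conv Px.
have -> : (fun T => W F (fun z => z ord0 i) T x) = (fun T => expT F T x ord0 i)
  by apply/funext => T; rewrite expT_W.
exact: coord_cvg.
Qed.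

Lemma Pv_zero_gen x v (g : 'rV[R]_n -> R) (c : R) :
  P x -> (fun T => W F g T x) @ \oo --> 0 ->
  (forall z, extreme_point P z -> (z == v)%:R <= g z) -> Pv F v x = 0.
Proof.
move=> Px hg hle; apply: lim_eq.
have hn : \forall T \near \oo, (fun _ : nat => (0:R)) T <= PvT F v T x <= W F g T x.
  apply: nearW => T; apply/andP; split.
  - rewrite PvT_W; have <- : W F (fun _ => 0) T x = 0 by apply: W0.
    by apply: (W_le wf (P_inbox Px)) => z _; case: (z == v).
  - by rewrite PvT_W; apply: (W_le wf (P_inbox Px)).
exact: (squeeze_cvgr hn (cvg_cst _) hg).
Qed.

Lemma Pv0_one (x v : 'rV[R]_n) o : P x -> x ord0 o = 1 -> v ord0 o = 0 -> Pv F v x = 0.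
Proof.
move=> Px xo vo; apply: (@Pv_zero_gen x v (fun z => 1 - z ord0 o) 0 Px).
- have -> : (fun T => W F (fun z => 1 - z ord0 o) T x) =
    (fun T => W F (fun _ => 1) T x - W F (fun z => z ord0 o) T x).
    by apply/funext => T; rewrite W_sub.
  have := cvgB (halt_cvg Px) (@coordW_cvg x o Px); rewrite xo subrr; exact.
- move=> z [[bz _] _]; case: eqP => [->|_]; first by rewrite vo subr0.
  by have /andP[_ ?] := bz o; rewrite subr_ge0.
Qed.

Lemma Pv0_zero (x v : 'rV[R]_n) o : P x -> x ord0 o = 0 -> v ord0 o = 1 -> Pv F v x = 0.
Proof.
move=> Px xo vo; apply: (@Pv_zero_gen x v (fun z => z ord0 o) 0 Px).
- by rewrite -xo; exact: (@coordW_cvg x o Px).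
- move=> z [[bz _] _]; case: eqP => [->|_]; first by rewrite vo.
  by have /andP[? _] := bz o.
Qed.

End P.
Section E.
Variables (R : realType) (n k : nat).
Local Notation P := (@hypersimplex R n k).

Definition Dfun (w : 'rV[R]_n) (a b : 'I_n) (z : 'rV[R]_n) : R :=
  \sum_(l < n) (if (l != a) && (l != b) then
                  (if w ord0 l == 1 then 1 - z ord0 l else z ord0 l) else 0).

Lemma Dfun_ge0 w a b z : inbox z -> 0 <= Dfun w a b z.
Proof.
move=> bz; apply: sumr_ge0 => l _; case: ifP => // _.
by have /andP[h0 h1] := bz l; case: ifP => _; rewrite ?subr_ge0.
Qed.

Lemma sw1_coord (w : 'rV[R]_n) a b l : a != b -> w ord0 a = 1 -> w ord0 b = 0 ->
  sw w a b 1 ord0 l = if l == b then 1 else if l == a then 0 else w ord0 l.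
Proof.
move=> ab wa wb; rewrite sw_coord mul1r.
have [->|lb] := eqVneq l b; first by rewrite eq_sym (negbTE ab) wb subr0 add0r.
have [->|la] := eqVneq l a; first by rewrite wa sub0r subrr.
by rewrite subrr addr0.
Qed.

Lemma edge_bound w a b z : P w -> (forall l, w ord0 l = 0 \/ w ord0 l = 1) -> a != b -> w ord0 a = 1 -> w ord0 b = 0 ->
  extreme_point P z -> z ord0 b - (z == sw w a b 1)%:R <= Dfun w a b z.
Proof.
move=> [bw sw_] w01 ab wa wb hz.
have z01 := ext01 hz; have [[bz sz] _] := hz.
have D0 := Dfun_ge0 w a b bz.
have zb1 : z ord0 b <= 1 by have /andP[] := bz b.
have ind0 : 0 <= (z == sw w a b 1)%:R :> R by case: (_ == _).
case: (boolP [exists l, [&& l != a, l != b & z ord0 l != w ord0 l]]).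
- move/existsP => [l /and3P [la lb zl]].
  have : 1 <= Dfun w a b z.
    rewrite /Dfun (bigD1 l) //= la lb /=.
    have rest : 0 <= \sum_(i < n | i != l) (if (i != a) && (i != b) then
                  (if w ord0 i == 1 then 1 - z ord0 i else z ord0 i) else 0).
      apply: sumr_ge0 => i _; case: ifP => // _.
      by have /andP[h0 h1] := bz i; case: ifP => _; rewrite ?subr_ge0.
    suff -> : (if w ord0 l == 1 then 1 - z ord0 l else z ord0 l) = 1 by lra.
    case: (w01 l) => wl; move: zl; rewrite wl.
      rewrite (_ : (0:R) == 1 = false); last by apply/negbTE; rewrite eq_sym oner_eq0.
      by case: (z01 l) => ->; rewrite ?eqxx.
    by rewrite eqxx; case: (z01 l) => ->; rewrite ?eqxx ?subr0.
  lra.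
- move/existsPn => hn.
  have zw : forall l, l != a -> l != b -> z ord0 l = w ord0 l.
    move=> l la lb; have := hn l; rewrite la lb /= negbK => /eqP //.
  have hab : z ord0 a + z ord0 b = 1.
    have h0 : \sum_(l < n) (z ord0 l - w ord0 l) = 0 by rewrite sumrB sz sw_ subrr.
    move: h0; rewrite (bigD1 a) //= (bigD1 b) 1?eq_sym //= big1.
      by rewrite wa wb; lra.
    by move=> l /andP[la lb]; rewrite zw // subrr.
  case: (z01 b) => zb.
    by rewrite zb; lra.
  have za : z ord0 a = 0 by lra.
  have -> : z == sw w a b 1.
    apply/eqP/rowP => l; rewrite sw1_coord //.
    have [->|lb] := eqVneq l b; first by [].
    have [->|la] := eqVneq l a; first by [].
    exact: zw.
  by rewrite zb subrr.
Qed.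

End E.
Section Q.
Variables (R : realType) (n k : nat).
Local Notation P := (@hypersimplex R n k).
Variable F : factory R n.
Hypothesis wf : factory_wf (extreme_point P) F.
Hypothesis conv : forall x, P x ->
     ((fun T => haltT F T x) @ \oo --> (1 : R)) /\
     ((fun T => expT F T x) @ \oo --> x).

Lemma Pv_edge (w : 'rV[R]_n) a b s : P w -> (forall l, w ord0 l = 0 \/ w ord0 l = 1) ->
  a != b -> w ord0 a = 1 -> w ord0 b = 0 -> 0 <= s <= 1 ->
  Pv F (sw w a b 1) (sw w a b s) = s.
Proof.
move=> Pw w01 ab wa wb /andP[s0 s1].
set v := sw w a b 1; set x := sw w a b s.
have Px : P x by apply: sw_P => //; rewrite ?wa ?wb; apply/andP; split; lra.
have xl : forall l, l != a -> l != b -> x ord0 l = w ord0 l.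
  by move=> l la lb; rewrite sw_coord (negbTE la) (negbTE lb) subrr mulr0 addr0.
have xb : x ord0 b = s by rewrite sw_coord eqxx eq_sym (negbTE ab) wb subr0 mulr1 add0r.
have hD : (fun T => W F (Dfun w a b) T x) @ \oo --> 0.
  pose g := fun (l : 'I_n) (z : 'rV[R]_n) => if (l != a) && (l != b) then
                  (if w ord0 l == 1 then 1 - z ord0 l else z ord0 l) else 0.
  have -> : (fun T => W F (Dfun w a b) T x) = (fun T => \sum_(l < n) W F (g l) T x).
    by apply/funext => T; rewrite /Dfun W_sum.
  suff h : forall l, (fun T => W F (g l) T x) @ \oo --> (0:R).
    have := @cvg_bigsum R 'I_n (index_enum 'I_n) (fun l T => W F (g l) T x) (fun _ => 0) h.
    by rewrite [X in _ --> X]big1.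
  move=> l.
  rewrite /g.
  case hc: ((l != a) && (l != b)); last first.
    have -> : (fun T => W F (fun _ => 0) T x) = (fun _ => 0).
      by apply/funext => T; apply: W0.
    exact: cvg_cst.
  move: hc => /andP[la lb]; case: (w01 l) => wl; rewrite wl.
    rewrite (_ : (0:R) == 1 = false); last by apply/negbTE; rewrite eq_sym oner_eq0.
    by have := coordW_cvg conv (i:=l) Px; rewrite xl // wl.
  rewrite eqxx.
  have -> : (fun T => W F (fun z => 1 - z ord0 l) T x) =
    (fun T => W F (fun _ => 1) T x - W F (fun z => z ord0 l) T x).
    by apply/funext => T; rewrite W_sub.
  have := cvgB (halt_cvg conv Px) (coordW_cvg conv (i:=l) Px).
  rewrite xl // wl subrr; exact.
have hE : (fun T => W F (fun z => z ord0 b - (z == v)%:R) T x) @ \oo --> 0.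
  have hn : \forall T \near \oo, (fun _ : nat => (0:R)) T <=
       W F (fun z => z ord0 b - (z == v)%:R) T x <= W F (Dfun w a b) T x.
    apply: nearW => T; apply/andP; split.
    - have <- : W F (fun _ => 0) T x = 0 by apply: W0.
      apply: (W_le wf (P_inbox Px)) => z [[bz _] _].
      rewrite subr_ge0; case: eqP => [->|_]; last by have /andP[] := bz b.
      by rewrite /v sw1_coord // eqxx.
    - apply: (W_le wf (P_inbox Px)) => z hz.
      exact: (edge_bound Pw w01 ab wa wb hz).
  exact: (squeeze_cvgr hn (cvg_cst _) hD).
apply: lim_eq.
have -> : (fun T => PvT F v T x) =
   (fun T => W F (fun z => z ord0 b) T x - W F (fun z => z ord0 b - (z == v)%:R) T x).
  by apply/funext => T; rewrite W_sub PvT_W opprB addrC subrK.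
have := cvgB (coordW_cvg conv (i:=b) Px) hE.
have := cvgB (coordW_cvg conv (i:=b) Px) hE; rewrite xb subr0 => h _; exact: (h _).
Qed.

End Q.
Section SW.
Variable R : realType.
Lemma within_const (f : R -> R) (A : set R) (K d dl0 : R) :
  0 < dl0 -> (forall t, 0 < t <= dl0 -> A t) -> (forall t, A t -> f t = K) ->
  f @ within A (nbhs (0:R)) --> d -> d = K.
Proof.
move=> d0 hA hf hcv; apply/eqP; apply/negPn/negP => dK.
have e0 : 0 < `|d - K| by rewrite normr_gt0 subr_eq0.
move/cvgrPdist_lt: hcv => /(_ _ e0).
rewrite near_withinE => /nbhs_ballP [r r0 hr].
pose t := Num.min (r / 2) dl0.
have t0 : 0 < t by rewrite lt_min d0 divr_gt0.
have t1 : t <= dl0 by rewrite ge_min lexx orbT.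
have t2 : t < r by rewrite gt_min; apply/orP; left; rewrite ltr_pdivrMr // ltr_pMr // ltr1n.
have At : A t by apply: hA; rewrite t0 t1.
have := hr t; rewrite /ball /= sub0r normrN gtr0_norm // => /(_ t2 At).
by rewrite hf // ltxx.
Qed.
End SW.
Section M.
Variables (R : realType) (n k : nat).
Local Notation P := (@hypersimplex R n k).

Lemma ext_of01 z : P z -> (forall l, z ord0 l = 0 \/ z ord0 l = 1) -> extreme_point P z.
Proof.
move=> Pz z01; split => // -[y [y' [l [[hy _] [[hy' _] [yy' [/andP[l0 l1] hz]]]]]]].
move/eqP: yy'; apply; apply/rowP => i.
have /andP[yi0 yi1] := hy i; have /andP[yi0' yi1'] := hy' i.
have := congr1 (fun M : 'rV[R]_n => M ord0 i) hz; rewrite /= !mxE => e.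
case: (z01 i) => zi; rewrite zi in e.
- have h1 : 0 <= l * y ord0 i by apply: mulr_ge0 => //; lra.
  have h2 : 0 <= (1 - l) * y' ord0 i by apply: mulr_ge0 => //; lra.
  have e1 : l * y ord0 i = 0 by lra.
  have e2 : (1 - l) * y' ord0 i = 0 by lra.
  move/eqP: e1; rewrite mulf_eq0 => /orP[/eqP|/eqP->]; first lra.
  move/eqP: e2; rewrite mulf_eq0 => /orP[/eqP|/eqP->//]; lra.
- have h1 : 0 <= l * (1 - y ord0 i) by apply: mulr_ge0 => //; lra.
  have h2 : 0 <= (1 - l) * (1 - y' ord0 i) by apply: mulr_ge0 => //; lra.
  have e1 : l * (1 - y ord0 i) = 0 by nra.
  have e2 : (1 - l) * (1 - y' ord0 i) = 0 by nra.
  move/eqP: e1; rewrite mulf_eq0 => /orP[/eqP|/eqP] e1; first lra.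
  move/eqP: e2; rewrite mulf_eq0 => /orP[/eqP|/eqP] e2; first lra.
  lra.
Qed.

Lemma affine_dir_seg (y1 y2 : 'rV[R]_n) (c : R) : P y1 -> P y2 ->
  affine_dir P (c *: (y2 - y1)).
Proof.
move=> P1 P2; exists ((1 - c) *: y1 + c *: y2), y1; split; last split.
- exists 2%N, (fun j : 'I_2 => if val j == 0%N then y1 else y2),
         (fun j : 'I_2 => if val j == 0%N then 1 - c else c).
  split; first by case=> [[|[|]]].
  by rewrite !big_ord_recl !big_ord0 /=; split; [ring | rewrite addr0].
- exists 1%N, (fun _ => y1), (fun _ => 1); split => //.
  by rewrite !big_ord_recl !big_ord0 /= !addr0 scale1r.
- by apply/rowP => i; rewrite !mxE; ring.
Qed.

Lemma sum_sq_dl (p q : 'I_n) : p != q ->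
  \sum_(l < n) ((l == q)%:R - (l == p)%:R) ^+ 2 = 2 :> R.
Proof.
move=> pq; rewrite (bigD1 q) //= (bigD1 p) 1?eq_sym //=.
rewrite !eqxx (negbTE pq) big1; first by rewrite /= addr0; ring.
  by move=> l /andP[lq lp]; rewrite (negbTE lq) (negbTE lp) subrr expr0n.
by rewrite eq_sym.
Qed.

Lemma enorm_u (p q : 'I_n) : p != q ->
  enorm ((Num.sqrt 2)^-1 *: (dl R q - dl R p)) = 1 :> R.
Proof.
move=> pq; rewrite /enorm.
under eq_bigr do rewrite !mxE exprMn.
rewrite -mulr_sumr sum_sq_dl // exprVn sqr_sqrtr ?ler0n // mulVf ?sqrtr1 //.
Qed.

End M.
Lemma sum_lt (R : realType) (n k : nat) : (k <= n)%N ->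
  \sum_(l < n) (((l < k)%N)%:R : R) = k%:R.
Proof.
move=> kn; rewrite -natr_sum; congr (_%:R).
elim: n kn => [|n IH] kn; first by rewrite big_ord0; move: kn; rewrite leqn0 => /eqP.
rewrite big_ord_recr /=.
have [kn'|] := leqP k n.
  by rewrite addn0 IH.
move=> nk; have -> : k = n.+1 by apply/eqP; rewrite eqn_leq kn nk.
rewrite addn1; congr (_.+1).
rewrite -[RHS]card_ord -sum1_card; apply: eq_bigr => i _; by rewrite ltnS ltnW.
Qed.

Theorem lemma7p7 (R : realType) (n k : nat) :
  (1 < k)%N -> (k < n - 1)%N ->
  ~ (exists F : factory R n,
       strong_factory (@hypersimplex R n k) F /\
       differentiable_factory (@hypersimplex R n k) F).
Proof.
move=> k1 kn [F [[wf conv] diff]].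
set P := @hypersimplex R n k in wf conv diff.
have kn' : (k.+1 < n)%N by move: kn; rewrite ltn_subRL add1n.
have nk : (k < n)%N by apply: ltn_trans kn'.
have n1 : (1 < n)%N by apply: ltn_trans nk.
have n0 : (0 < n)%N by apply: ltn_trans n1.
pose a := Ordinal n0; pose i1 := Ordinal n1; pose b := Ordinal nk; pose j1 := Ordinal kn'.
have ab : a != b by apply/eqP => -[] h; move: k1; rewrite -h.
have aj : a != j1 by apply/eqP => -[].
have ib : i1 != b by apply/eqP => -[] h; move: k1; rewrite -h.
have ij : i1 != j1 by apply/eqP => -[] h; move: k1; rewrite -h.
have bj : b != j1 by apply/eqP => -[] /eqP; rewrite eqn_leq ltnn andbF.
have ai : a != i1 by apply/eqP => -[].
pose w : 'rV[R]_n := \row_l (((l : nat) < k)%N)%:R.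
have wc : forall l, w ord0 l = (((l : nat) < k)%N)%:R by move=> l; rewrite mxE.
have w01 : forall l, w ord0 l = 0 \/ w ord0 l = 1.
  by move=> l; rewrite wc; case: (_ < _)%N; [right | left].
have Pw : P w.
  split; last by under eq_bigr do rewrite wc; apply: sum_lt; apply: ltnW.
  by move=> l; case: (w01 l) => ->; rewrite ?lexx ?ler01.
have wa : w ord0 a = 1 by rewrite wc /= (ltn_trans _ k1).
have wi : w ord0 i1 = 1 by rewrite wc /= k1.
have wb : w ord0 b = 0 by rewrite wc /= ?ltnn.
have wj : w ord0 j1 = 0 by rewrite wc /= ltnNge leqnSn.
pose v := sw w a b 1.
have vc : forall l, v ord0 l = if l == b then 1 else if l == a then 0 else w ord0 l.
  by move=> l; rewrite sw1_coord.
have va : v ord0 a = 0 by rewrite vc (negbTE ab) eqxx.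
have vb : v ord0 b = 1 by rewrite vc eqxx.
have Pv_ : P v by apply: sw_P => //; rewrite ?wa ?wb; apply/andP; split; lra.
have extv : extreme_point P v.
  apply: ext_of01 => // l; rewrite vc.
  by case: (l == b); [right | case: (l == a); [left | exact: w01]].
pose c : R := (Num.sqrt 2)^-1.
have c0 : 0 < c by rewrite invr_gt0 sqrtr_gt0 ltr0n.
have cc : c * c = 2^-1 by rewrite -expr2 exprVn sqr_sqrtr ?ler0n.
have c1 : c <= 1 by nra.
pose u (p q : 'I_n) : 'rV[R]_n := c *: (dl R q - dl R p).
have key : forall p q (K : R), p != q -> w ord0 p = 1 -> w ord0 q = 0 ->
   (forall s, 0 <= s <= 1 -> Pv F v (sw w p q s) = K * s) ->
   (fun T => DPvT F v T w (u p q)) @ \oo --> K * c.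
  move=> p q K pq wp wq hK.
  have Pe : P (sw w p q 1) by apply: sw_P => //; rewrite ?wp ?wq; apply/andP; split; lra.
  have ad : affine_dir P (u p q).
    have := affine_dir_seg c Pw Pe.
    by rewrite /sw scale1r addrAC subrr add0r.
  have nu : enorm (u p q) = 1 := enorm_u R pq.
  have [d [hd1 hd2]] := diff v extv (u p q) ad nu w Pw.
  have shift : forall t, w + t *: u p q = sw w p q (t * c).
    by move=> t; rewrite /sw /u scalerA.
  have w0 : sw w p q 0 = w by rewrite /sw scale0r addr0.
  have Pvw : Pv F v w = 0 by rewrite -w0 hK ?mulr0 // lexx ler01.
  have eqd : d = K * c.
    apply: (within_const (dl0 := 1) _ _ _ hd1) => //.
    - move=> t /andP[t0 t1]; split; first by rewrite gt_eqF.
      rewrite shift; apply: sw_P => //; rewrite ?wq ?wp; apply/andP; split; nra.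
    - move=> t [tn0 hP]; rewrite shift in hP.
      have hs := sw_P_inv wq pq hP.
      rewrite shift hK // Pvw subr0; field; exact: tn0.
  have -> : (fun T => DPvT F v T w (u p q)) = (fun T => dir_deriv (PvT F v T) w (u p q)).
    by apply/funext => T; rewrite dir_deriv_PvT.
  by rewrite -eqd.
have h0 := key a b 1 ab wa wb (fun s hs => etrans (Pv_edge wf conv Pw w01 ab wa wb hs) (esym (mul1r s))).
have h1 : (fun T => DPvT F v T w (u a j1)) @ \oo --> 0 * c.
  apply: key => // s hs; rewrite mul0r; apply: (Pv0_zero wf conv (o := b)) => //.
    by apply: sw_P => //; rewrite ?wa ?wj; apply/andP; split; lra.
  by rewrite sw_coord (negbTE bj) eq_sym (negbTE ab) wb subrr mulr0 addr0.
have h2 : (fun T => DPvT F v T w (u i1 b)) @ \oo --> 0 * c.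
  apply: key => // s hs; rewrite mul0r; apply: (Pv0_one wf conv (o := a)) => //.
    by apply: sw_P => //; rewrite ?wi ?wb; apply/andP; split; lra.
  by rewrite sw_coord (negbTE ab) (negbTE ai) subrr mulr0 addr0.
have h3 : (fun T => DPvT F v T w (u i1 j1)) @ \oo --> 0 * c.
  apply: key => // s hs; rewrite mul0r; apply: (Pv0_one wf conv (o := a)) => //.
    by apply: sw_P => //; rewrite ?wi ?wj; apply/andP; split; lra.
  by rewrite sw_coord (negbTE aj) (negbTE ai) subrr mulr0 addr0.
have ulin : u a b = u a j1 + u i1 b - u i1 j1.
  by apply/rowP => l; rewrite !mxE; ring.
have h4 : (fun T => DPvT F v T w (u a b)) @ \oo --> 0 * c + 0 * c - 0 * c.
  have -> : (fun T => DPvT F v T w (u a b)) = (fun T => DPvT F v T w (u a j1) +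
     DPvT F v T w (u i1 b) - DPvT F v T w (u i1 j1)).
    by apply/funext => T; rewrite ulin DPvT_lin.
  have := cvgB (cvgD h1 h2) h3; exact.
have := lim_eq h0; rewrite (lim_eq h4) !mul0r addr0 subr0 mul1r => /eqP.
by rewrite eq_sym (gt_eqF c0).
Qed.
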